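(* Let $d\ge 1$, $G\in\mathrm{GL}_{1+d}(\mathbb{R})$, $\gamma\in\mathbb{R}^{1+d}$, $\mathcal{G}(\tilde X)=G\tilde X+\gamma$, and let $(x_A,\xi_A)\in\mathbb{R}^d\times\mathbb{R}^d$ with $\|\xi_A\|<1$ and $\sigma(\xi_A)\notin G\mathcal{P}_0$. Let $(x_B,\xi_B)=\kappa_{U_{\mathcal{G}}}(x_A,\xi_A)$, where $\kappa_{U_{\mathcal{G}}}(x,\xi)=\big(({}^tdg(\xi))^{-1}(x-dS(\xi)),\ g(\xi)\big)$ with $g(\xi)=\boldsymbol{\pi}({}^tG\sigma(\xi))$ and $S(\xi)=\langle\gamma,\sigma(\xi)\rangle$. Let ${}^t\boldsymbol{\pi}:\mathbb{R}^d\to\mathbb{R}^{1+d}$, ${}^t\boldsymbol{\pi}(x)=(0,x)$, and set $A={}^t\boldsymbol{\pi}x_A$ and $B=\mathcal{G}({}^t\boldsymbol{\pi}x_B)$. Then $B-A$ is collinear to $\sigma(\xi_A)$.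
   Context: $\mathbb{R}^{1+d}$ with canonical basis $e_0,\dots,e_d$, Euclidean scalar product $\langle\cdot,\cdot\rangle$; $\boldsymbol{\pi}:\mathbb{R}^{1+d}\to\mathbb{R}^d$ drops the first coordinate; $\sigma(\xi)=(\sqrt{1-\|\xi\|^2},\xi)$ for $\|\xi\|<1$; $\mathcal{P}_0=\{\xi_0=0\}\subset\mathbb{R}^{1+d}$; ${}^t$ denotes transpose. The map $\kappa_{U_{\mathcal{G}}}$ is the (local) canonical transformation associated with the rotated angular spectrum propagator $U_{\mathcal{G}}$; under the assumption $\sigma(\xi_A)\notin G\mathcal{P}_0$, $dg(\xi_A)$ is invertible. *)

(* Defs.v *)
From HB Require Import structures.
From mathcomp Require Import all_boot all_order all_algebra.
From mathcomp Require Import all_classical all_reals all_analysis.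
Set Implicit Arguments. Unset Strict Implicit. Unset Printing Implicit Defensive.
Import Order.TTheory GRing.Theory Num.Theory.
Import numFieldNormedType.Exports.
Local Open Scope ring_scope.

(* Points of R^n are row vectors 'rV[R]_n; a matrix M acting on column
   vectors X (X |-> M X) acts on row vectors as X |-> X *m M^T. *)

Section Defs.
Variable R : realType.

Definition dotv n (u v : 'rV[R]_n) : R := (u *m v^T) 0 0.
Definition enorm n (u : 'rV[R]_n) : R := Num.sqrt (dotv u u).

Definition sigma d (xi : 'rV[R]_d) : 'rV[R]_(1 + d) :=
  row_mx (Num.sqrt (1 - enorm xi ^+ 2))%:M xi.

Definition piproj d (X : 'rV[R]_(1 + d)) : 'rV[R]_d := rsubmx X.
Definition tpi d (x : 'rV[R]_d) : 'rV[R]_(1 + d) := row_mx 0 x.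

Definition P0 d : set 'rV[R]_(1 + d) := [set X | X 0 0 = 0].

Definition Gimage d (G : 'M[R]_(1 + d)) (P : set 'rV[R]_(1 + d)) :
  set 'rV[R]_(1 + d) := [set Y | exists2 X, P X & Y = X *m G^T].

Definition affG d (G : 'M[R]_(1 + d)) (gamma : 'rV[R]_(1 + d))
  (X : 'rV[R]_(1 + d)) : 'rV[R]_(1 + d) := X *m G^T + gamma.

Definition gmap d (G : 'M[R]_(1 + d)) (xi : 'rV[R]_d) : 'rV[R]_d :=
  piproj (sigma xi *m G).
Definition Smap d (gamma : 'rV[R]_(1 + d)) (xi : 'rV[R]_d) : R :=
  dotv gamma (sigma xi).

(* matrix of the differential dg(xi): row i is dg(xi) e_i, so that
   dg(xi) h = h *m Dg; the transpose tdg(xi) then acts as h |-> h *m Dg^T *)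
Definition Dgmx d (G : 'M[R]_(1 + d)) (xi : 'rV[R]_d) : 'M[R]_d :=
  lin1_mx ('d (gmap G) xi).

Definition gradS d (gamma : 'rV[R]_(1 + d)) (xi : 'rV[R]_d) : 'rV[R]_d :=
  \row_i ('d (Smap gamma) xi (delta_mx 0 i) : R).

Definition kappa d (G : 'M[R]_(1 + d)) (gamma : 'rV[R]_(1 + d))
  (x xi : 'rV[R]_d) : 'rV[R]_d * 'rV[R]_d :=
  ((x - gradS gamma xi) *m invmx (Dgmx G xi)^T, gmap G xi).

End Defs.

(* Main.v *)
Require Import Defs.
From HB Require Import structures.
From mathcomp Require Import all_boot all_order all_algebra.
From mathcomp Require Import all_classical all_reals all_analysis.
From mathcomp Require Import ring lra.
Import Order.TTheory GRing.Theory Num.Theory.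
Import numFieldNormedType.Exports.
Local Open Scope ring_scope.
Set Implicit Arguments. Unset Strict Implicit.

Section Aux.
Variable R : realType.

Lemma lin_diffable m n (W : normedModType R) (f : 'M[R]_(m,n) -> W) :
  linear f -> forall x, differentiable f x.
Proof.
move=> lf x.
pose fL : {linear 'M[R]_(m,n) -> W} := HB.pack f (GRing.isLinear.Build _ _ _ _ f lf).
have -> : f = \sum_(i < m) \sum_(j < n) (fun X : 'M[R]_(m,n) => X i j *: f (delta_mx i j)).
  apply/funext => X; rewrite !fct_sumE.
  rewrite {1}(matrix_sum_delta X).
  rewrite -[f]/(fL : _ -> _) linear_sum; apply: eq_bigr => i _.
  rewrite fct_sumE linear_sum; apply: eq_bigr => j _.
  by rewrite linearZ.
apply: differentiable_sum => i; apply: differentiable_sum => j.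
exact/differentiableZl/differentiable_coord.
Qed.

Lemma lin_is_diff m n (W : normedModType R) (f : 'M[R]_(m,n) -> W) :
  linear f -> forall x, is_diff x f f.
Proof.
move=> lf x.
pose fL : {linear 'M[R]_(m,n) -> W} := HB.pack f (GRing.isLinear.Build _ _ _ _ f lf).
have cf : continuous fL.
  move=> y; apply: differentiable_continuous; exact: lin_diffable.
apply: DiffDef; first exact: lin_diffable.
exact: (diff_lin _ cf).
Qed.


Lemma is_diff_sumI (V W : normedModType R) n (f df : 'I_n -> V -> W) x :
  (forall i, is_diff x (f i) (df i)) -> is_diff x (\sum_i f i) (\sum_i df i).
Proof.
elim: n f df => [|n IH] f df H.
  rewrite !big_ord0; exact: is_diff_cst.
rewrite !big_ord_recr /=; apply: is_diffD.
Qed.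

Lemma dotvE n (u v : 'rV[R]_n) : dotv u v = \sum_i u 0 i * v 0 i.
Proof. by rewrite /dotv mxE; apply: eq_bigr => i _; rewrite mxE. Qed.

Lemma dotvC n (u v : 'rV[R]_n) : dotv u v = dotv v u.
Proof. by rewrite !dotvE; apply: eq_bigr => i _; rewrite mulrC. Qed.

Lemma dotv_ge0 n (u : 'rV[R]_n) : 0 <= dotv u u.
Proof. by rewrite dotvE; apply: sumr_ge0 => i _; rewrite -expr2 sqr_ge0. Qed.

Lemma dotv_eq0 n (u : 'rV[R]_n) : dotv u u = 0 -> u = 0.
Proof.
rewrite dotvE => /eqP; rewrite psumr_eq0; last by move=> i _; rewrite -expr2 sqr_ge0.
move=> /allP H; apply/rowP => i; rewrite mxE.
have := H i (mem_index_enum i); rewrite implyTb mulf_eq0 orbb.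
by move/eqP.
Qed.

Lemma dsq n (x : 'rV[R]_n) :
  differentiable (fun u : 'rV[R]_n => dotv u u) x /\
  forall h, 'd (fun u : 'rV[R]_n => dotv u u) x h = 2 * dotv x h.
Proof.
have E : (fun u : 'rV[R]_n => dotv u u) =
   \sum_(i < n) ((fun u : 'rV[R]_n => u 0 i) * (fun u : 'rV[R]_n => u 0 i)).
  by apply/funext => u; rewrite dotvE fct_sumE.
have lc : forall i, linear (fun u : 'rV[R]_n => u 0 i).
  by move=> i a u v; rewrite !mxE.
have H : is_diff x (fun u : 'rV[R]_n => dotv u u)
   (\sum_(i < n) (x 0 i *: (fun u : 'rV[R]_n => u 0 i) + x 0 i *: (fun u : 'rV[R]_n => u 0 i))).
  rewrite E; apply: is_diff_sumI => i.
  apply: is_diffM; exact: lin_is_diff.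
split; first exact: ex_diff.
move=> h; rewrite diff_val fct_sumE dotvE mulr_sumr; apply: eq_bigr => i _.
by rewrite /= mulr2n mulrDl mul1r.
Qed.

Definition qf n (xi : 'rV[R]_n) : R := Num.sqrt (1 - dotv xi xi).

Lemma dqf n (x : 'rV[R]_n) : dotv x x < 1 ->
  differentiable (@qf n) x /\ forall h, 'd (@qf n) x h * qf x = - dotv x h.
Proof.
move=> x1.
have [d1 d2] := dsq x.
pose phi := fun u : 'rV[R]_n => 1 - dotv u u.
have dphi : differentiable phi x.
  exact: differentiableB.
have dphiE : forall h, 'd phi x h = - (2 * dotv x h).
  move=> h; rewrite /phi diffB // diff_cst /= -d2.
  by rewrite -[0 h]/(0:R) sub0r.
have p0 : 0 < phi x by rewrite /phi subr_gt0.
have dsqrt : differentiable (@Num.sqrt R) (phi x).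
  apply/derivable1_diffP; have := is_derive1_sqrt p0; by case.
have -> : @qf n = Num.sqrt \o phi by [].
split; first exact: differentiable_comp.
move=> h; rewrite diff_comp //= deriv1E; last first.
  by apply/derivable1_diffP.
rewrite derive1E derive_sqrt // dphiE.
have s0 : Num.sqrt (phi x) != 0 by rewrite gt_eqF // sqrtr_gt0.
rewrite -[_ *: _]/(_ * _); field; exact: s0.
Qed.

Lemma dot_row n (a b : 'rV[R]_1) (u v : 'rV[R]_n) :
  dotv (row_mx a u) (row_mx b v) = a 0 0 * b 0 0 + dotv u v.
Proof.
rewrite /dotv tr_row_mx mul_row_col mxE; congr (_ + _).
by rewrite mxE big_ord1 mxE.
Qed.

Lemma dot_mulmx n m (u : 'rV[R]_n) (v : 'rV[R]_m) (M : 'M[R]_(m, n)) :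
  dotv (u *m M^T) v = dotv u (v *m M).
Proof. by rewrite /dotv trmx_mul mulmxA. Qed.

Lemma dotvDl n (u v w : 'rV[R]_n) : dotv (u + v) w = dotv u w + dotv v w.
Proof. by rewrite !dotvE -big_split; apply: eq_bigr => i _; rewrite mxE mulrDl. Qed.

Lemma dotvNl n (u w : 'rV[R]_n) : dotv (- u) w = - dotv u w.
Proof. by rewrite !dotvE -sumrN; apply: eq_bigr => i _; rewrite mxE mulNr. Qed.

Lemma dotvZl n a (u w : 'rV[R]_n) : dotv (a *: u) w = a * dotv u w.
Proof. by rewrite !dotvE mulr_sumr; apply: eq_bigr => i _; rewrite mxE mulrA. Qed.

Lemma dotv0r n (u : 'rV[R]_n) : dotv u 0 = 0.
Proof. by rewrite dotvE big1 // => i _; rewrite mxE mulr0. Qed.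

Lemma dotv0l n (u : 'rV[R]_n) : dotv 0 u = 0.
Proof. by rewrite dotvC dotv0r. Qed.

Lemma sigmaE n (xi : 'rV[R]_n) : sigma xi = row_mx (qf xi)%:M xi.
Proof. by rewrite /sigma /qf /enorm sqr_sqrtr // dotv_ge0. Qed.

End Aux.

Section S. Variable R : realType.
Lemma dsigma n (x : 'rV[R]_n) : dotv x x < 1 ->
  differentiable (@sigma R n) x /\
  forall h, 'd (@sigma R n) x h = row_mx ('d (@qf R n) x h)%:M h.
Proof.
move=> x1; have [dq _] := dqf x1.
pose e0 : 'rV[R]_(1 + n) := row_mx 1%:M 0.
have E : @sigma R n = (fun u => qf u *: e0) + (@tpi R n).
  rewrite addrfctE; apply/funext => u /=; rewrite sigmaE /e0 /tpi scale_row_mx add_row_mx.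
  by rewrite scaler0 addr0 add0r scalemx1.
have lt : linear (@tpi R n).
  by move=> a u v; rewrite /tpi scale_row_mx add_row_mx scaler0 addr0.
have dt := lin_is_diff lt x.
have H1 : is_diff x (fun u => qf u *: e0) (fun h => 'd (@qf R n) x h *: e0).
  exact: DiffDef (differentiableZl e0 dq) (diffZl e0 dq).
have H2 := is_diffD H1 dt.
have I : is_diff x (@sigma R n) (fun h => row_mx ('d (@qf R n) x h)%:M h).
  rewrite E. apply: is_diff_eq H2 _. apply/funext => h.
  transitivity ('d (@qf R n) x h *: e0 + tpi h); first by [].
  rewrite /e0 /tpi scale_row_mx add_row_mx.
  by rewrite scaler0 addr0 add0r scalemx1.
split; first exact: ex_diff.
by move=> h; rewrite diff_val.
Qed.

Lemma dgmap n (G : 'M[R]_(1 + n)) (x : 'rV[R]_n) : dotv x x < 1 ->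
  forall h, 'd (gmap G) x h = rsubmx (row_mx ('d (@qf R n) x h)%:M h *m G).
Proof.
move=> x1 h; have [ds dsE] := dsigma x1.
have lf : linear (fun X : 'rV[R]_(1 + n) => piproj (X *m G)).
  by move=> a u v; rewrite /piproj mulmxDl -scalemxAl linearP.
have dl := lin_is_diff lf (sigma x).
have I1 : is_diff x (@sigma R n) ('d (@sigma R n) x) by exact: DiffDef.
have I2 := is_diff_comp I1 dl.
have -> : gmap G = (fun X : 'rV[R]_(1 + n) => piproj (X *m G)) \o (@sigma R n) by [].
rewrite diff_val.
transitivity (piproj ('d (@sigma R n) x h *m G)); first by [].
by rewrite dsE.
Qed.

Lemma dSmap n (g : 'rV[R]_(1 + n)) (x : 'rV[R]_n) : dotv x x < 1 ->
  forall h, 'd (Smap g) x h = dotv g (row_mx ('d (@qf R n) x h)%:M h).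
Proof.
move=> x1 h; have [ds dsE] := dsigma x1.
have lf : linear (fun X : 'rV[R]_(1 + n) => dotv g X).
  move=> a u v; rewrite !dotvE scaler_sumr -big_split; apply: eq_bigr => i _.
  by rewrite !mxE mulrDr mulrCA.
have dl := lin_is_diff lf (sigma x).
have I1 : is_diff x (@sigma R n) ('d (@sigma R n) x) by exact: DiffDef.
have I2 := is_diff_comp I1 dl.
have -> : Smap g = (fun X : 'rV[R]_(1 + n) => dotv g X) \o (@sigma R n) by [].
rewrite diff_val.
transitivity (dotv g ('d (@sigma R n) x h)); first by [].
by rewrite dsE.
Qed.
End S.

Theorem lemma5p8 (R : realType) (d : nat) (G : 'M[R]_(1 + d))
  (gamma : 'rV[R]_(1 + d)) (xA xiA : 'rV[R]_d) :
  (0 < d)%N ->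
  G \in unitmx ->
  enorm xiA < 1 ->
  ~ Gimage G (@P0 R d) (sigma xiA) ->
  let xB := (kappa G gamma xA xiA).1 in
  let A := tpi xA in
  let B := affG G gamma (tpi xB) in
  exists c : R, B - A = c *: sigma xiA.
Proof.
move=> _ Gu xi1 notim xB A B.
set xi := xiA.
have x1 : dotv xi xi < 1.
  have e0 : 0 <= enorm xi by rewrite /enorm sqrtr_ge0.
  have -> : dotv xi xi = enorm xi ^+ 2 by rewrite /enorm sqr_sqrtr // dotv_ge0.
  rewrite expr2; nra.
have [dq dqE] := dqf x1.
set q := qf xi.
have q0 : 0 < q by rewrite /q /qf sqrtr_gt0 subr_gt0.
set Ds := fun h : 'rV[R]_d => row_mx ('d (@qf R d) xi h)%:M h.
have sigE : sigma xi = row_mx q%:M xi by rewrite sigmaE.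
have orth : forall h, dotv (sigma xi) (Ds h) = 0.
  move=> h; rewrite sigE dot_row !mxE !mulr1n mulrC dqE dotvC.
  by rewrite addNr.
have dgE := dgmap G x1.
have dSE := dSmap gamma x1.
set D := Dgmx G xi.
have DE : forall h, h *m D = rsubmx (Ds h *m G).
  by move=> h; rewrite /D /Dgmx mul_rV_lin1 dgE.
have inj : forall h : 'rV[R]_d, h *m D = 0 -> h = 0.
  move=> h; rewrite DE => w0.
  set w := Ds h *m G in w0.
  have wE : w = row_mx (lsubmx w) 0 by rewrite -w0 hsubmxK.
  have DsE : Ds h = w *m invmx G by rewrite /w mulmxK.
  set X := sigma xi *m invmx G^T.
  have XE : sigma xi = X *m G^T by rewrite /X mulmxKV // unitmx_tr.
  have X0 : X 0 0 != 0.
    apply/eqP => X00; apply: notim; exists X => //.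
  have : dotv (sigma xi) (Ds h) = 0 by exact: orth.
  rewrite XE dot_mulmx DsE mulmxKV // -[X]hsubmxK wE dot_row dotv0r addr0.
  have -> : lsubmx X 0 0 = X 0 0 by rewrite mxE; congr (X _ _); apply/val_inj.
  move/eqP; rewrite mulf_eq0 (negbTE X0) /= => /eqP l0.
  have lw : lsubmx w = 0 by apply/rowP => j; rewrite ord1 l0 mxE.
  have : Ds h = 0 by rewrite DsE wE lw row_mx0 mul0mx.
  by move=> /(congr1 rsubmx); rewrite row_mxKr linear0.
have Du : D \in unitmx.
  rewrite -row_free_unit -kermx_eq0; apply/eqP/row_matrixP => i.
  rewrite row0; apply: inj; by rewrite -row_mul mulmx_ker row0.
have xBE : xB *m D^T = xA - gradS gamma xi.
  by rewrite /xB /kappa /= mulmxKV // unitmx_tr.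
have gradE : forall h, dotv (gradS gamma xi) h = 'd (Smap gamma) xi h.
  move=> h; rewrite dotvE {2}(row_sum_delta h) linear_sum; apply: eq_bigr => i _.
  by rewrite linearZ /= mxE mulrC.
have key : forall h, dotv (B - A) (Ds h) = 0.
  move=> h.
  rewrite /B /A /affG dotvDl dotvNl dotvDl dot_mulmx.
  rewrite -[Ds h *m G]hsubmxK -DE /tpi dot_row dot_row.
  have -> : dotv xB (h *m D) = dotv (xB *m D^T) h.
    by rewrite /dotv trmx_mul mulmxA.
  rewrite xBE dotvDl dotvNl gradE dSE -/(Ds h).
  have z : (0 : 'rV[R]_1) 0 0 = 0 by rewrite mxE.
  by rewrite !z !mul0r !add0r subrK subrr.
have ss : dotv (sigma xi) (sigma xi) = 1.
  rewrite sigE dot_row !mxE !mulr1n /q /qf -expr2 sqr_sqrtr; first by rewrite subrK.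
  by rewrite subr_ge0 ltW.
exists (dotv (B - A) (sigma xi)).
set c := dotv (B - A) (sigma xi).
set u := B - A - c *: sigma xi.
have uo : dotv u (sigma xi) = 0.
  by rewrite /u dotvDl dotvNl dotvZl ss mulr1 subrr.
have e : lsubmx u 0 0 * q + dotv xi (rsubmx u) = 0.
  rewrite -uo -[in RHS](hsubmxK u) sigE dot_row !mxE mulr1n.
  by rewrite dotvC.
have l : lsubmx u 0 0 = 'd (@qf R d) xi (rsubmx u).
  have e2 := dqE (rsubmx u); rewrite -/q in e2.
  have : (lsubmx u 0 0 - 'd (@qf R d) xi (rsubmx u)) * q = 0.
    rewrite mulrBl; lra.
  move/eqP; rewrite mulf_eq0 (gt_eqF q0) orbF subr_eq0 => /eqP //.
have uE : u = row_mx ('d (@qf R d) xi (rsubmx u))%:M (rsubmx u).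
  rewrite -l -{1}(hsubmxK u); congr row_mx.
  by apply/rowP => j; rewrite ord1 !mxE mulr1n.
have k1 : dotv (B - A) u = 0 by rewrite uE; exact: key.
have k2 : dotv (sigma xi) u = 0 by rewrite uE; exact: orth.
have uu : dotv u u = 0.
  by rewrite {1}/u dotvDl dotvNl dotvZl k1 k2 mulr0 subrr.
by apply/eqP; rewrite -subr_eq0; apply/eqP; exact: dotv_eq0.
Qed.
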